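(* Let $j$ be an integer, $a=2^j$, $b=2^{j+1}$, let $n>1$ be an integer, and let $s_1,\dots,s_n$ and $w_1,\dots,w_n$ be the nodes and weights of the $n$-point Gauss–Legendre quadrature on $[a,b]$. Then for every $\alpha\in(0,1)$ and every $t>0$, $$\left|\int_a^b e^{-ts}s^{\alpha-1}\,ds-\sum_{k=1}^n w_k s_k^{\alpha-1}e^{-s_k t}\right|<2\sqrt{2}\,\pi\, a^{\alpha}\left(\frac{e^{1/e}}{4}\right)^{2n}.$$
   Context: The $n$-point Gauss–Legendre quadrature on $[a,b]$ is the rule $\int_a^b\varphi(s)\,ds\approx\sum_{k=1}^n w_k\varphi(s_k)$ with nodes at the zeros of the degree-$n$ Legendre polynomial mapped to $[a,b]$, exact for all polynomials of degree at most $2n-1$. *)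

(* Defs.v *)
From Stdlib Require Import Reals Lra Lia List.
From Coquelicot Require Import Coquelicot.
Open Scope R_scope.

(* Legendre polynomials on [-1,1] via Bonnet's recurrence:
   P_0 = 1, P_1 = x, (m+1) P_{m+1} = (2m+1) x P_m - m P_{m-1}. *)
Fixpoint legendre (n : nat) (x : R) : R :=
  match n with
  | O => 1
  | S m =>
      match m with
      | O => x
      | S k => ((2 * INR m + 1) * x * legendre m x - INR m * legendre k x)
               / (INR m + 1)
      end
  end.

Definition qsum (n : nat) (f : nat -> R) : R :=
  fold_right Rplus 0 (map f (seq 0 n)).

(* (s k, w k)_{k<n} is the n-point Gauss–Legendre rule on [a,b]:
   the n nodes are pairwise distinct zeros of the degree-n Legendre polynomial
   mapped affinely to [a,b], and the rule is exact for all polynomials of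
   degree <= 2n-1 (equivalently, for the monomials x^i, i < 2n). *)
Definition is_gauss_legendre (n : nat) (a b : R) (s w : nat -> R) : Prop :=
  (forall k l, (k < n)%nat -> (l < n)%nat -> s k = s l -> k = l) /\
  (forall k, (k < n)%nat -> legendre n ((2 * s k - a - b) / (b - a)) = 0) /\
  (forall i, (i < 2 * n)%nat ->
     RInt (fun x => x ^ i) a b = qsum n (fun k => w k * (s k) ^ i)).

(* Main.v *)
Require Import Defs.
From Stdlib Require Import Reals Lra Lia List Classical.
From Coquelicot Require Import Coquelicot.
Open Scope R_scope.

Lemma qsum_0 f : qsum 0 f = 0.
Proof. reflexivity. Qed.

Lemma qsum_S n f : qsum (S n) f = qsum n f + f n.
Proof.
  unfold qsum. rewrite seq_S, map_app, fold_right_app. simpl.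
  generalize (map f (seq 0 n)). intro l. induction l; simpl; lra.
Qed.

Lemma qsum_ext n f g : (forall i, (i < n)%nat -> f i = g i) -> qsum n f = qsum n g.
Proof.
  induction n; intros H. reflexivity.
  rewrite !qsum_S, IHn, H; auto.
Qed.

Lemma qsum_plus n f g : qsum n (fun i => f i + g i) = qsum n f + qsum n g.
Proof. induction n. unfold qsum; simpl; lra. rewrite !qsum_S, IHn; cbv beta; lra. Qed.

Lemma qsum_scal n c f : qsum n (fun i => c * f i) = c * qsum n f.
Proof. induction n. unfold qsum; simpl; lra. rewrite !qsum_S, IHn; cbv beta; lra. Qed.

Lemma qsum_zero n f : (forall i, (i < n)%nat -> f i = 0) -> qsum n f = 0.
Proof. intros H; induction n. reflexivity. rewrite qsum_S, IHn, H; auto; lra. Qed.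

Lemma qsum_S_first n f : qsum (S n) f = f 0%nat + qsum n (fun i => f (S i)).
Proof. induction n. unfold qsum; simpl; lra. rewrite qsum_S, IHn, (qsum_S n). lra. Qed.

Lemma qsum_swap n m (F : nat -> nat -> R) :
  qsum n (fun i => qsum m (fun j => F i j)) = qsum m (fun j => qsum n (fun i => F i j)).
Proof.
  induction n. rewrite qsum_0. symmetry. apply qsum_zero. intros; apply qsum_0.
  rewrite qsum_S, IHn, <- qsum_plus. apply qsum_ext. intros; rewrite qsum_S; lra.
Qed.

Lemma qsum_delta n k g : (k < n)%nat -> (forall i, (i < n)%nat -> i <> k -> g i = 0) -> qsum n g = g k.
Proof.
  induction n; intros Hk H. lia.
  rewrite qsum_S. destruct (Nat.eq_dec k n).
  - subst. rewrite qsum_zero; [lra|]. intros; apply H; lia.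
  - rewrite IHn; [|lia|]. rewrite (H n); [lra|lia|lia]. intros; apply H; lia.
Qed.

Lemma qsum_abs n f : Rabs (qsum n f) <= qsum n (fun i => Rabs (f i)).
Proof.
  induction n. rewrite !qsum_0, Rabs_R0; lra.
  rewrite !qsum_S. eapply Rle_trans. apply Rabs_triang. lra.
Qed.

Lemma qsum_le n f g : (forall i, (i < n)%nat -> f i <= g i) -> qsum n f <= qsum n g.
Proof. induction n; intros H. unfold qsum; simpl; lra. rewrite !qsum_S. assert (f n <= g n) by (apply H; lia).
  assert (qsum n f <= qsum n g) by (apply IHn; intros; apply H; lia). lra. Qed.

Lemma qsum_sum_f n f : qsum (S n) f = sum_f_R0 f n.
Proof. induction n. unfold qsum; simpl; lra. rewrite qsum_S, IHn. simpl. lra. Qed.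

Definition span (d : nat) (f : R -> R) : Prop :=
  exists c : nat -> R, forall x, f x = qsum d (fun i => c i * x ^ i).

Lemma span_ext d f g : span d f -> (forall x, f x = g x) -> span d g.
Proof. intros [c Hc] H. exists c. intros x. rewrite <- H. apply Hc. Qed.

Lemma span_zero d : span d (fun _ => 0).
Proof. exists (fun _ => 0). intros x. rewrite qsum_zero; auto. intros; lra. Qed.

Lemma span_plus d f g : span d f -> span d g -> span d (fun x => f x + g x).
Proof.
  intros [c Hc] [c' Hc']. exists (fun i => c i + c' i). intros x.
  rewrite Hc, Hc', <- qsum_plus. apply qsum_ext; intros; ring.
Qed.

Lemma span_scal d a f : span d f -> span d (fun x => a * f x).
Proof.
  intros [c Hc]. exists (fun i => a * c i). intros x.
  rewrite Hc, <- qsum_scal. apply qsum_ext; intros; ring.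
Qed.

Lemma span_opp d f : span d f -> span d (fun x => - f x).
Proof. intros H. apply span_ext with (fun x => -1 * f x). apply span_scal; auto. intros; ring. Qed.

Lemma span_minus d f g : span d f -> span d g -> span d (fun x => f x - g x).
Proof. intros H1 H2. apply span_ext with (fun x => f x + - g x). apply span_plus; auto.
  apply span_opp; auto. intros; ring. Qed.

Lemma span_mono d d' f : (d <= d')%nat -> span d f -> span d' f.
Proof.
  intros Hd [c Hc]. exists (fun i => if (i <? d)%nat then c i else 0). intros x.
  rewrite Hc. replace d' with (d + (d' - d))%nat by lia.
  generalize (d' - d)%nat. intros k. induction k.
  - rewrite Nat.add_0_r. apply qsum_ext. intros i Hi.
    destruct (Nat.ltb_spec i d); [auto|lia].
  - rewrite Nat.add_succ_r, qsum_S, <- IHk.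
    destruct (Nat.ltb_spec (d + k) d); [lia|]. ring.
Qed.

Lemma span_mon d i a : (i < d)%nat -> span d (fun x => a * x ^ i).
Proof.
  intros H. exists (fun j => if (j =? i)%nat then a else 0). intros x.
  rewrite (qsum_delta d i); auto. rewrite Nat.eqb_refl. auto.
  intros j _ Hj. apply Nat.eqb_neq in Hj. rewrite Hj. ring.
Qed.

Lemma span_const d a : (0 < d)%nat -> span d (fun _ => a).
Proof. intros H. apply span_ext with (fun x => a * x ^ 0). apply span_mon; auto. intros; simpl; ring. Qed.

Lemma span_qsum d k (F : nat -> R -> R) :
  (forall i, (i < k)%nat -> span d (F i)) -> span d (fun x => qsum k (fun i => F i x)).
Proof.
  induction k; intros H.
  - apply span_zero.
  - apply span_ext with (fun x => qsum k (fun i => F i x) + F k x).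
    apply span_plus. apply IHk; intros; apply H; lia. apply H; lia.
    intros; rewrite qsum_S; auto.
Qed.

Lemma span_xmul d g : span d g -> span (S d) (fun x => x * g x).
Proof.
  intros [c Hc]. exists (fun i => match i with O => 0 | S j => c j end). intros x.
  rewrite qsum_S_first, Hc, <- qsum_scal. simpl. rewrite Rmult_0_l, Rplus_0_l.
  apply qsum_ext; intros; ring.
Qed.

Lemma span_powmul d k g : span d g -> span (k + d) (fun x => x ^ k * g x).
Proof.
  induction k; intros H.
  - simpl. apply span_ext with g; auto. intros; ring.
  - simpl. apply span_ext with (fun x => x * (x ^ k * g x)). apply span_xmul; auto.
    intros; ring.
Qed.

Lemma span_mul d1 d2 f g : span d1 f -> span d2 g -> span (d1 + d2 - 1) (fun x => f x * g x).
Proof.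
  intros [c Hc] Hg.
  apply span_ext with (fun x => qsum d1 (fun i => c i * (x ^ i * g x))).
  apply span_qsum. intros i Hi. apply span_scal. apply span_mono with (i + d2)%nat. lia.
  apply span_powmul; auto.
  intros x. rewrite Hc. rewrite Rmult_comm, <- qsum_scal. apply qsum_ext; intros; ring.
Qed.

Definition monic (m : nat) (f : R -> R) : Prop :=
  exists r, span m r /\ forall x, f x = x ^ m + r x.

Lemma monic_mul m k f g : monic m f -> monic k g -> monic (m + k) (fun x => f x * g x).
Proof.
  intros [r [Hr Hf]] [r' [Hr' Hg]].
  exists (fun x => x ^ m * r' x + x ^ k * r x + r x * r' x). split.
  - apply span_plus. apply span_plus. apply span_powmul; auto.
    replace (m + k)%nat with (k + m)%nat by lia. apply span_powmul; auto.
    apply span_mono with (m + k - 1)%nat. lia. apply span_mul; auto.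
  - intros x. rewrite Hf, Hg, pow_add. ring.
Qed.

Lemma monic_lin z : monic 1 (fun x => x - z).
Proof. exists (fun _ => - z). split. apply span_const; lia. intros; simpl; ring. Qed.

Lemma monic_prod (l : list nat) (z : nat -> R) :
  monic (length l) (fun x => fold_right Rmult 1 (map (fun j => x - z j) l)).
Proof.
  induction l; simpl.
  - exists (fun _ => 0). split. apply span_zero. intros; simpl; ring.
  - change (S (length l)) with (1 + length l)%nat. apply monic_mul with (f := fun x => x - z a).
    apply monic_lin. apply IHl.
Qed.

Lemma span_prod (l : list nat) (h : nat -> R -> R) :
  (forall j, span 2 (h j)) -> span (S (length l)) (fun x => fold_right Rmult 1 (map (fun j => h j x) l)).
Proof.
  intros H. induction l; simpl.
  - apply span_const; lia.
  - replace (S (S (length l))) with (2 + S (length l) - 1)%nat by lia.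
    apply span_mul; auto.
Qed.

Lemma span_lin a b : span 2 (fun x => a * x + b).
Proof. apply span_ext with (fun x => a * x ^ 1 + b * x ^ 0). apply span_plus; apply span_mon; lia.
  intros; simpl; ring. Qed.

Lemma isd_plus f g x df dg : is_derive f x df -> is_derive g x dg ->
  is_derive (fun y => f y + g y) x (df + dg).
Proof. intros H1 H2. exact (is_derive_plus f g x df dg H1 H2). Qed.
Lemma isd_minus f g x df dg : is_derive f x df -> is_derive g x dg ->
  is_derive (fun y => f y - g y) x (df - dg).
Proof. intros H1 H2. exact (is_derive_minus f g x df dg H1 H2). Qed.
Lemma isd_mult f g x df dg : is_derive f x df -> is_derive g x dg ->
  is_derive (fun y => f y * g y) x (df * g x + f x * dg).
Proof. intros H1 H2. exact (is_derive_mult f g x df dg H1 H2 Rmult_comm). Qed.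
Lemma isd_const a x : is_derive (fun _ => a) x 0.
Proof. exact (is_derive_const a x). Qed.

Lemma exr_plus f g a b : ex_RInt f a b -> ex_RInt g a b -> ex_RInt (fun y => f y + g y) a b.
Proof. intros H1 H2. exact (ex_RInt_plus f g a b H1 H2). Qed.
Lemma exr_minus f g a b : ex_RInt f a b -> ex_RInt g a b -> ex_RInt (fun y => f y - g y) a b.
Proof. intros H1 H2. exact (ex_RInt_minus f g a b H1 H2). Qed.
Lemma exr_scal f a b k : ex_RInt f a b -> ex_RInt (fun y => k * f y) a b.
Proof. intros H1. exact (ex_RInt_scal f a b k H1). Qed.
Lemma RInt_plus_R f g a b : ex_RInt f a b -> ex_RInt g a b ->
  RInt (fun y => f y + g y) a b = RInt f a b + RInt g a b.
Proof. intros H1 H2. exact (RInt_plus f g a b H1 H2). Qed.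
Lemma RInt_minus_R f g a b : ex_RInt f a b -> ex_RInt g a b ->
  RInt (fun y => f y - g y) a b = RInt f a b - RInt g a b.
Proof. intros H1 H2. exact (RInt_minus f g a b H1 H2). Qed.
Lemma RInt_scal_R f a b k : ex_RInt f a b -> RInt (fun y => k * f y) a b = k * RInt f a b.
Proof. intros H1. exact (RInt_scal f a b k H1). Qed.

Fixpoint ff (k i : nat) : R :=
  match i with O => 1 | S i' => ff k i' * INR (k - i') end.

Lemma ff_zero k i : (k < i)%nat -> ff k i = 0.
Proof.
  induction i; intros H. lia. simpl. destruct (Nat.eq_dec k i).
  - subst. rewrite Nat.sub_diag. simpl. ring.
  - rewrite IHi; [ring|lia].
Qed.

Lemma ff_S k i : ff (S k) (S i) = INR (S k) * ff k i.
Proof.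
  induction i. simpl. ring.
  change (ff (S k) (S (S i))) with (ff (S k) (S i) * INR (S k - S i)).
  rewrite IHi. simpl (S k - S i)%nat. simpl ff. ring.
Qed.

Lemma ff_fact m : ff m m = INR (Factorial.fact m).
Proof.
  induction m. reflexivity. rewrite ff_S, IHm. change (Factorial.fact (S m)) with (S m * Factorial.fact m)%nat. rewrite mult_INR. reflexivity.
Qed.

Lemma isd_term c k i x :
  is_derive (fun y => c * ff k i * y ^ (k - i)) x (c * ff k (S i) * x ^ (k - S i)).
Proof.
  assert (H := derivable_pt_lim_pow x (k - i)). apply is_derive_Reals in H.
  apply (is_derive_scal _ _ (c * ff k i)) in H.
  replace (c * ff k (S i) * x ^ (k - S i)) with (c * ff k i * (INR (k - i) * x ^ Init.Nat.pred (k - i))).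
  exact H. simpl ff. replace (Init.Nat.pred (k - i)) with (k - S i)%nat by lia. ring.
Qed.

Lemma isd_qsum d (F : nat -> R -> R) F' x :
  (forall k, (k < d)%nat -> is_derive (F k) x (F' k)) ->
  is_derive (fun y => qsum d (fun k => F k y)) x (qsum d F').
Proof.
  induction d; intros H.
  - apply is_derive_ext with (fun _ => 0). intros; reflexivity. rewrite qsum_0. apply isd_const.
  - apply is_derive_ext with (fun y => qsum d (fun k => F k y) + F d y).
    intros; rewrite qsum_S; reflexivity. rewrite qsum_S. apply isd_plus.
    apply IHd; intros; apply H; lia. apply H; lia.
Qed.

Definition chain (D : R -> Prop) (G : nat -> R -> R) :=
  forall i x, D x -> is_derive (G i) x (G (S i) x).

Definition PG (c : nat -> R) d i x := qsum d (fun k => c k * ff k i * x ^ (k - i)).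

Lemma span_chain d f : span d f -> exists G, chain (fun _ => True) G /\
  (forall x, G O x = f x) /\ (forall i x, (d <= i)%nat -> G i x = 0).
Proof.
  intros [c Hc]. exists (PG c d). split; [|split].
  - intros i x _. unfold PG. apply isd_qsum. intros; apply isd_term.
  - intros x. rewrite Hc. unfold PG. apply qsum_ext. intros. rewrite Nat.sub_0_r. simpl. ring.
  - intros i x H. unfold PG. apply qsum_zero. intros k Hk. rewrite ff_zero; [ring|lia].
Qed.

Lemma monic_chain m f : monic m f -> exists G, chain (fun _ => True) G /\
  (forall x, G O x = f x) /\ (forall x, G m x = INR (Factorial.fact m)).
Proof.
  intros [r [Hr Hf]]. destruct (span_chain _ _ Hr) as [R0 [HR [HR0 HRd]]].
  exists (fun i x => 1 * ff m i * x ^ (m - i) + R0 i x). split; [|split].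
  - intros i x _. apply isd_plus. apply isd_term. apply HR; auto.
  - intros x. rewrite Hf, HR0. simpl. rewrite Nat.sub_0_r. ring.
  - intros x. rewrite HRd, ff_fact, Nat.sub_diag; auto. simpl; ring.
Qed.

Lemma span_cont d f : span d f -> forall x, continuous f x.
Proof.
  intros H x. destruct (span_chain _ _ H) as [G [HG [H0 _]]].
  apply continuous_ext with (G O). exact H0.
  apply (ex_derive_continuous (G O) x). eexists. apply HG; auto.
Qed.

Lemma span_exr d f a b : span d f -> ex_RInt f a b.
Proof. intros H. apply (ex_RInt_continuous (V:=R_CompleteNormedModule)). intros; eapply span_cont; eauto. Qed.

Lemma exr_qsum d (F : nat -> R -> R) a b : (forall i, (i < d)%nat -> ex_RInt (F i) a b) ->
  ex_RInt (fun x => qsum d (fun i => F i x)) a b.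
Proof.
  induction d; intros H.
  - apply ex_RInt_ext with (fun _ => 0). intros; reflexivity.
    apply (ex_RInt_continuous (V:=R_CompleteNormedModule)). intros; apply continuous_const.
  - apply ex_RInt_ext with (fun x => qsum d (fun i => F i x) + F d x).
    intros; rewrite qsum_S; reflexivity. apply exr_plus. apply IHd; intros; apply H; lia. apply H; lia.
Qed.

Lemma RInt_qsum d (F : nat -> R -> R) a b : (forall i, (i < d)%nat -> ex_RInt (F i) a b) ->
  RInt (fun x => qsum d (fun i => F i x)) a b = qsum d (fun i => RInt (F i) a b).
Proof.
  induction d; intros H.
  - rewrite qsum_0. rewrite (RInt_ext _ (fun _ => 0)). rewrite RInt_const. unfold scal; simpl; unfold mult; simpl; ring.
    intros; reflexivity.
  - rewrite (RInt_ext _ (fun x => qsum d (fun i => F i x) + F d x)).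
    rewrite RInt_plus_R, IHd, qsum_S. reflexivity.
    intros; apply H; lia. apply exr_qsum; intros; apply H; lia. apply H; lia.
    intros; rewrite qsum_S; reflexivity.
Qed.

Lemma exact_span n a b (s w : nat -> R) g :
  (forall i, (i < 2 * n)%nat -> RInt (fun x => x ^ i) a b = qsum n (fun k => w k * s k ^ i)) ->
  span (2 * n) g -> RInt g a b = qsum n (fun k => w k * g (s k)).
Proof.
  intros He [c Hc].
  rewrite (RInt_ext _ (fun x => qsum (2 * n) (fun i => c i * x ^ i))); [|intros; apply Hc].
  rewrite RInt_qsum.
  2:{ intros. apply exr_scal. apply (span_exr (S i)). apply span_ext with (fun x => 1 * x ^ i).
      apply span_mon; lia. intros; ring. }
  rewrite (qsum_ext _ _ (fun i => qsum n (fun k => c i * (w k * s k ^ i)))).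
  2:{ intros i Hi. rewrite RInt_scal_R, He, <- qsum_scal; auto.
      apply (span_exr (S i)). apply span_ext with (fun x => 1 * x ^ i). apply span_mon; lia. intros; ring. }
  rewrite qsum_swap. apply qsum_ext. intros k Hk. rewrite Hc, <- qsum_scal. apply qsum_ext. intros; ring.
Qed.

Definition excl (m i : nat) := seq 0 i ++ seq (S i) (m - S i).

Lemma In_excl j m i : (i < m)%nat -> (In j (excl m i) <-> (j < m /\ j <> i)%nat).
Proof. intros H. unfold excl. rewrite in_app_iff, !in_seq. lia. Qed.

Lemma length_excl m i : (i < m)%nat -> length (excl m i) = (m - 1)%nat.
Proof. intros H. unfold excl. rewrite length_app, !length_seq. lia. Qed.

Lemma prod_zero (l : list nat) h j : In j l -> h j = 0 -> fold_right Rmult 1 (map h l) = 0.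
Proof.
  induction l; simpl; intros Hi Hh. contradiction.
  destruct Hi as [<-|Hi]. rewrite Hh; ring. rewrite IHl; auto; ring.
Qed.

Lemma prod_one (l : list nat) h : (forall j, In j l -> h j = 1) -> fold_right Rmult 1 (map h l) = 1.
Proof.
  induction l; simpl; intros H. reflexivity. rewrite H, IHl; auto. ring.
Qed.

Lemma prod_nz (l : list nat) h : (forall j, In j l -> h j <> 0) -> fold_right Rmult 1 (map h l) <> 0.
Proof.
  induction l; simpl; intros H. lra. apply Rmult_integral_contrapositive_currified; auto.
Qed.

Definition ell (z : nat -> R) m i y :=
  fold_right Rmult 1 (map (fun j => (y - z j) / (z i - z j)) (excl m i)).
Definition lag (F0 : R -> R) z m y := qsum m (fun i => F0 (z i) * ell z m i y).
Definition omega (z : nat -> R) m y := fold_right Rmult 1 (map (fun j => y - z j) (seq 0 m)).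

Definition inj_on (m : nat) (z : nat -> R) := forall i j, (i < m)%nat -> (j < m)%nat -> z i = z j -> i = j.

Lemma ell_self z m i : inj_on m z -> (i < m)%nat -> ell z m i (z i) = 1.
Proof.
  intros Hz Hi. unfold ell. apply prod_one. intros j Hj. apply In_excl in Hj; auto.
  field. intros E. apply Rminus_diag_uniq in E. apply Hz in E; lia.
Qed.

Lemma ell_other z m i k : (i < m)%nat -> (k < m)%nat -> k <> i -> ell z m i (z k) = 0.
Proof.
  intros Hi Hk Hki. unfold ell. apply (prod_zero _ _ k). apply In_excl; auto.
  unfold Rdiv. rewrite Rminus_diag. ring.
Qed.

Lemma ell_span z m i : (i < m)%nat -> span m (ell z m i).
Proof.
  intros Hi. unfold ell.
  replace m with (S (length (excl m i))) at 1 by (rewrite length_excl; lia).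
  apply span_prod. intros j. apply span_ext with (fun y => / (z i - z j) * y + (- z j / (z i - z j))).
  apply span_lin. intros; unfold Rdiv; ring.
Qed.

Lemma lag_span F0 z m : span m (lag F0 z m).
Proof. unfold lag. apply span_qsum. intros. apply span_scal. apply ell_span; auto. Qed.

Lemma lag_node F0 z m k : inj_on m z -> (k < m)%nat -> lag F0 z m (z k) = F0 (z k).
Proof.
  intros Hz Hk. unfold lag. rewrite (qsum_delta m k); auto.
  rewrite ell_self; auto; ring. intros i Hi Hik. rewrite ell_other; auto; ring.
Qed.

Lemma omega_monic z m : monic m (omega z m).
Proof. unfold omega. rewrite <- (length_seq m 0) at 1. apply monic_prod. Qed.

Lemma omega_zero z m k : (k < m)%nat -> omega z m (z k) = 0.
Proof. intros Hk. unfold omega. apply (prod_zero _ _ k). apply in_seq; lia. ring. Qed.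

Lemma omega_nz z m x : (forall k, (k < m)%nat -> x <> z k) -> omega z m x <> 0.
Proof. intros H. unfold omega. apply prod_nz. intros j Hj. apply in_seq in Hj.
  specialize (H j ltac:(lia)). lra. Qed.

Lemma list_max (l : list R) : l <> nil -> exists M, In M l /\ forall y, In y l -> y <= M.
Proof.
  induction l as [|a l IH]; intros H. congruence.
  destruct l as [|b l'].
  - exists a. split. left; auto. intros y [<-|[]]. lra.
  - destruct IH as [M [HM HM']]. congruence.
    destruct (Rle_dec a M).
    + exists M. split. right; auto. intros y [<-|Hy]; auto.
    + exists a. split. left; auto. intros y [<-|Hy]. lra. specialize (HM' y Hy). lra.
Qed.

Lemma rolle_step (g g' : R -> R) L U :
  (forall x, L <= x <= U -> is_derive g x (g' x)) ->
  forall l, NoDup l -> (forall y, In y l -> L <= y <= U /\ g y = 0) ->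
  exists l', length l' = pred (length l) /\ NoDup l' /\
    forall y, In y l' -> (L <= y <= U /\ g' y = 0) /\ exists v, In v l /\ y < v.
Proof.
  intros Hd l. remember (length l) as n eqn:Hn. revert l Hn.
  induction n as [n IH] using (well_founded_induction Wf_nat.lt_wf).
  intros l Hn Hnd Hz.
  destruct l as [|a0 l0].
  { exists nil. split. simpl in *; subst; reflexivity. split. constructor. intros y []. }
  destruct (list_max (a0 :: l0)) as [M [HM HMax]]. congruence.
  destruct (in_split _ _ HM) as [l1 [l2 E]]. rewrite E in Hnd.
  destruct (NoDup_remove _ _ _ Hnd) as [Hnd' HnM].
  remember (l1 ++ l2) as r eqn:Er.
  assert (Hr : forall y, In y r -> In y (a0 :: l0)).
  { intros y Hy. rewrite E. rewrite Er in Hy. apply in_app_iff in Hy. apply in_app_iff.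
    destruct Hy; [left|right; right]; auto. }
  assert (Hlen : length r = pred n).
  { subst n. rewrite E. rewrite Er. rewrite !length_app. simpl. lia. }
  destruct (classic (r = nil)) as [Hnil|Hnn].
  { exists nil. split. rewrite Hnil in Hlen. simpl in *. lia. split. constructor. intros y []. }
  destruct (IH (pred n)) with (l := r) as [l'' [Hl1 [Hl2 Hl3]]].
  { destruct r; [congruence|]. simpl in Hlen. lia. } auto. auto.
  { intros y Hy. apply Hz. apply Hr. auto. }
  destruct (list_max r) as [M2 [HM2 HM2']]. auto.
  assert (HM2l := Hr _ HM2).
  assert (M2 < M).
  { assert (M2 <= M) by (apply HMax; auto). destruct (Req_dec M2 M); [|lra].
    subst. exfalso. apply HnM. exact HM2. }
  destruct (Hz _ HM) as [[HLM HUM] HgM]. destruct (Hz _ HM2l) as [[HLM2 HUM2] HgM2].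
  destruct (MVT_cor2 g g' M2 M) as [rho [Hrho1 Hrho2]]; auto.
  { intros c Hc. apply is_derive_Reals. apply Hd. lra. }
  assert (Hg'r : g' rho = 0).
  { rewrite HgM, HgM2, Rminus_0_r in Hrho1. symmetry in Hrho1. apply Rmult_integral in Hrho1 as [|]; lra. }
  assert (Hbelow : forall y, In y l'' -> y <= M2).
  { intros y Hy. destruct (Hl3 y Hy) as [_ [v [Hv Hyv]]].
    specialize (HM2' v Hv). lra. }
  exists (rho :: l''). split; [|split].
  - simpl. rewrite Hl1. destruct r; [congruence|]. simpl in Hlen. simpl. lia.
  - constructor; auto. intros Hin. specialize (Hbelow _ Hin). lra.
  - intros y [<-|Hy].
    + split. split; [lra|auto]. exists M. split; auto. lra.
    + destruct (Hl3 y Hy) as [H1 [v [Hv Hyv]]]. split; auto. exists v. split; auto.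
Qed.

Lemma rolle_iter m (G : nat -> R -> R) L U :
  (forall i x, L <= x <= U -> is_derive (G i) x (G (S i) x)) ->
  forall l, NoDup l -> length l = S m -> (forall y, In y l -> L <= y <= U /\ G O y = 0) ->
  exists xi, L <= xi <= U /\ G m xi = 0.
Proof.
  revert G. induction m; intros G Hd l Hnd Hl Hz.
  - destruct l as [|y l]. simpl in Hl; lia. exists y. apply Hz. left; auto.
  - destruct (rolle_step (G O) (G 1%nat) L U) with (l := l) as [l' [Hl1 [Hl2 Hl3]]]; auto.
    destruct (IHm (fun i => G (S i))) with (l := l') as [xi Hxi].
    + intros; apply Hd; auto.
    + auto.
    + rewrite Hl1, Hl; auto.
    + intros y Hy. apply Hl3; auto.
    + exists xi; exact Hxi.
Qed.

Lemma interp_error (F : nat -> R -> R) m z L U x :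
  (forall i y, L <= y <= U -> is_derive (F i) y (F (S i) y)) ->
  inj_on m z -> (forall i, (i < m)%nat -> L <= z i <= U) -> L <= x <= U ->
  exists xi, L <= xi <= U /\
    F O x - lag (F O) z m x = omega z m x * F m xi / INR (Factorial.fact m).
Proof.
  intros HF Hz HzLU Hx.
  destruct (classic (exists k, (k < m)%nat /\ x = z k)) as [[k [Hk ->]]|Hnot].
  { exists (z k). split. apply HzLU; auto. rewrite lag_node, omega_zero; auto.
    unfold Rdiv; ring. }
  assert (Hnz : omega z m x <> 0).
  { apply omega_nz. intros k Hk E. apply Hnot. exists k; auto. }
  set (K := (F O x - lag (F O) z m x) / omega z m x).
  destruct (span_chain _ _ (lag_span (F O) z m)) as [P [HP [HP0 HPd]]].
  destruct (monic_chain _ _ (omega_monic z m)) as [W [HW [HW0 HWm]]].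
  destruct (rolle_iter m (fun i y => F i y - P i y - K * W i y) L U) with
    (l := x :: map z (seq 0 m)) as [xi [Hxi Hxi0]].
  - intros i y Hy. apply isd_minus. apply isd_minus. apply HF; auto. apply HP; auto.
    apply is_derive_scal. apply HW; auto.
  - constructor.
    + intros Hin. apply in_map_iff in Hin as [k [Hk1 Hk2]]. apply in_seq in Hk2.
      apply Hnot. exists k. split; [lia|auto].
    + apply NoDup_map_NoDup_ForallPairs. intros i j Hi Hj E. apply in_seq in Hi, Hj.
      apply Hz; auto; lia. apply seq_NoDup.
  - simpl. rewrite length_map, length_seq. reflexivity.
  - intros y [<-|Hy].
    + split; auto. rewrite HP0, HW0. unfold K. field; auto.
    + apply in_map_iff in Hy as [k [<- Hk]]. apply in_seq in Hk. split. apply HzLU; lia.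
      rewrite HP0, HW0, lag_node, omega_zero; auto; try lia. ring.
  - exists xi. split; auto. rewrite HPd, HWm in Hxi0; auto.
    assert (HK : K = F m xi / INR (Factorial.fact m)).
    { assert (Hf := INR_fact_neq_0 m). field_simplify_eq; auto. lra. }
    assert (F O x - lag (F O) z m x = K * omega z m x) by (unfold K; field; auto).
    rewrite H, HK. field. apply INR_fact_neq_0.
Qed.

Fixpoint ecoef (t al : R) (m i : nat) : R :=
  match m with
  | O => match i with O => 1 | _ => 0 end
  | S m' => (match i with O => 0 | S i' => - t * ecoef t al m' i' end)
            + ecoef t al m' i * (al - 1 - INR m' + INR i)
  end.

Definition Sm t al m x := qsum (S m) (fun i => ecoef t al m i * Rpower x (al - 1 - INR m + INR i)).
Definition Fch t al m x := exp (- t * x) * Sm t al m x.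

Lemma ecoef_zero t al m i : (m < i)%nat -> ecoef t al m i = 0.
Proof.
  revert i. induction m; intros i H; simpl.
  - destruct i; [lia|auto].
  - destruct i; [lia|]. rewrite IHm, (IHm (S i)); try lia. ring.
Qed.

Lemma Sm_derive t al m x : 0 < x ->
  is_derive (Sm t al m) x (Sm t al (S m) x + t * Sm t al m x).
Proof.
  intros Hx. unfold Sm.
  apply is_derive_ext with (fun y => qsum (S m) (fun i => ecoef t al m i * Rpower y (al - 1 - INR m + INR i))).
  intros; reflexivity.
  replace (qsum (S (S m)) (fun i => ecoef t al (S m) i * Rpower x (al - 1 - INR (S m) + INR i)) +
    t * qsum (S m) (fun i => ecoef t al m i * Rpower x (al - 1 - INR m + INR i)))
  with (qsum (S m) (fun i => ecoef t al m i * ((al - 1 - INR m + INR i) * Rpower x (al - 1 - INR m + INR i - 1)))).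
  - apply isd_qsum. intros k Hk. apply is_derive_scal. apply is_derive_Reals.
    apply derivable_pt_lim_power; auto.
  - simpl ecoef.
    rewrite (qsum_ext (S (S m)) _ (fun i => (match i with O => 0 | S i' => - t * ecoef t al m i' end) *
        Rpower x (al - 1 - INR (S m) + INR i) +
        ecoef t al m i * (al - 1 - INR m + INR i) * Rpower x (al - 1 - INR (S m) + INR i))).
    2:{ intros; ring. }
    rewrite qsum_plus.
    rewrite (qsum_S_first (S m) (fun i => (match i with O => 0 | S i' => - t * ecoef t al m i' end) *
        Rpower x (al - 1 - INR (S m) + INR i))).
    rewrite (qsum_S (S m) (fun i => ecoef t al m i * (al - 1 - INR m + INR i) * Rpower x (al - 1 - INR (S m) + INR i))).
    cbv beta iota.
    rewrite (ecoef_zero t al m (S m)); [|lia].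
    rewrite <- qsum_scal.
    rewrite (qsum_ext (S m) (fun i => - t * ecoef t al m i * Rpower x (al - 1 - INR (S m) + INR (S i)))
      (fun i => - (t * (ecoef t al m i * Rpower x (al - 1 - INR m + INR i))))).
    2:{ intros. replace (al - 1 - INR (S m) + INR (S i)) with (al - 1 - INR m + INR i) by (rewrite !S_INR; ring). ring. }
    rewrite (qsum_ext (S m) (fun i => ecoef t al m i * (al - 1 - INR m + INR i) * Rpower x (al - 1 - INR (S m) + INR i))
      (fun i => ecoef t al m i * ((al - 1 - INR m + INR i) * Rpower x (al - 1 - INR m + INR i - 1)))).
    2:{ intros. replace (al - 1 - INR (S m) + INR i) with (al - 1 - INR m + INR i - 1) by (rewrite !S_INR; ring). ring. }
    assert (forall n (f : nat -> R), qsum n (fun i => - f i) = - qsum n f).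
    { intros n f. rewrite <- (qsum_ext n (fun i => -1 * f i)). rewrite qsum_scal. ring. intros; ring. }
    rewrite H. ring.
Qed.

Lemma Fch_derive t al m x : 0 < x -> is_derive (Fch t al m) x (Fch t al (S m) x).
Proof.
  intros Hx. unfold Fch.
  assert (He : is_derive (fun y => exp (- t * y)) x (- t * exp (- t * x))).
  { auto_derive; auto. ring. }
  assert (H := isd_mult _ _ x _ _ He (Sm_derive t al m x Hx)).
  eapply is_derive_ext; [|replace (exp (- t * x) * Sm t al (S m) x) with
    (- t * exp (- t * x) * Sm t al m x + exp (- t * x) * (Sm t al (S m) x + t * Sm t al m x)) by ring; exact H].
  intros; reflexivity.
Qed.

Lemma Fch_0 t al x : Fch t al 0 x = exp (- t * x) * Rpower x (al - 1).
Proof. unfold Fch, Sm. rewrite qsum_S, qsum_0. simpl ecoef. f_equal.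
  replace (al - 1 - INR 0 + INR 0) with (al - 1) by (simpl; ring). ring. Qed.

Definition Bnd t m i := INR (Factorial.fact m) / INR (Factorial.fact i) * t ^ i.

Lemma fact_pos i : 0 < INR (Factorial.fact i).
Proof. apply lt_0_INR. apply Factorial.lt_O_fact. Qed.

Lemma Bnd_nonneg t m i : 0 < t -> 0 <= Bnd t m i.
Proof. intros. unfold Bnd. assert (H1 := fact_pos m). assert (H2 := fact_pos i).
  apply Rmult_le_pos. apply Rlt_le, Rdiv_lt_0_compat; auto. apply pow_le; lra. Qed.

Lemma Bnd_Si t m i : Bnd t m (S i) = Bnd t m i * t / INR (S i).
Proof. unfold Bnd. change (Factorial.fact (S i)) with (S i * Factorial.fact i)%nat.
  rewrite mult_INR. simpl pow. assert (H2 := fact_pos i). assert (0 < INR (S i)) by (apply lt_0_INR; lia).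
  field. lra. Qed.

Lemma Bnd_SmSi t m i : Bnd t (S m) (S i) = Bnd t m i * t * INR (S m) / INR (S i).
Proof. unfold Bnd. change (Factorial.fact (S i)) with (S i * Factorial.fact i)%nat.
  change (Factorial.fact (S m)) with (S m * Factorial.fact m)%nat.
  rewrite !mult_INR. simpl pow. assert (H2 := fact_pos i). assert (0 < INR (S i)) by (apply lt_0_INR; lia).
  field. lra. Qed.

Lemma Bnd_Sm0 t m : Bnd t (S m) 0 = Bnd t m 0 * INR (S m).
Proof. unfold Bnd. change (Factorial.fact (S m)) with (S m * Factorial.fact m)%nat.
  rewrite mult_INR. simpl. field. Qed.

Lemma ecoef_bound t al m i : 0 < t -> 0 < al < 1 -> Rabs (ecoef t al m i) <= Bnd t m i.
Proof.
  intros Ht Hal. revert i. induction m; intros i.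
  - destruct i; simpl. unfold Bnd; simpl. rewrite Rabs_R1. lra.
    rewrite Rabs_R0. apply Bnd_nonneg; auto.
  - destruct i as [|i].
    + simpl ecoef. rewrite Rplus_0_l, Rabs_mult, Bnd_Sm0.
      apply Rmult_le_compat; try apply Rabs_pos. apply IHm.
      rewrite S_INR. simpl INR. assert (0 <= INR m) by apply pos_INR.
      rewrite Rabs_left1; lra.
    + simpl ecoef. eapply Rle_trans. apply Rabs_triang.
      rewrite Rabs_mult, Rabs_mult, Rabs_Ropp, (Rabs_pos_eq t); [|lra].
      assert (HB := Bnd_nonneg t m i Ht).
      destruct (Compare_dec.le_lt_dec (S i) m).
      * assert (Hi : INR (S i) <= INR m) by (apply le_INR; lia).
        assert (Habs : Rabs (al - 1 - INR m + INR (S i)) <= INR m - INR i).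
        { rewrite S_INR in *. rewrite Rabs_left1; lra. }
        assert (H1 := IHm i). assert (H2 := IHm (S i)).
        rewrite Bnd_Si in H2. rewrite Bnd_SmSi.
        apply Rle_trans with (t * Bnd t m i + Bnd t m i * t / INR (S i) * (INR m - INR i)).
        apply Rplus_le_compat. apply Rmult_le_compat_l; lra.
        apply Rmult_le_compat; try apply Rabs_pos; auto.
        assert (0 < INR (S i)) by (apply lt_0_INR; lia).
        right. rewrite !S_INR. field. rewrite S_INR in H. lra.
      * rewrite (ecoef_zero t al m (S i)); [|lia]. rewrite Rabs_R0, Rmult_0_l, Rplus_0_r.
        destruct (Nat.eq_dec i m).
        -- subst. rewrite Bnd_SmSi. assert (H1 := IHm m).
           apply Rle_trans with (t * Bnd t m m). apply Rmult_le_compat_l; lra.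
           right. field. apply not_0_INR. lia.
        -- rewrite (ecoef_zero t al m i); [|lia]. rewrite Rabs_R0, Rmult_0_r.
           apply Bnd_nonneg; auto.
Qed.

Lemma Fch_bound t al m x : 0 < t -> 0 < al < 1 -> 0 < x ->
  Rabs (Fch t al m x) <= INR (Factorial.fact m) * Rpower x (al - 1 - INR m).
Proof.
  intros Ht Hal Hx. unfold Fch. rewrite Rabs_mult, Rabs_pos_eq; [|apply Rlt_le, exp_pos].
  unfold Sm. eapply Rle_trans. apply Rmult_le_compat_l. apply Rlt_le, exp_pos. apply qsum_abs.
  apply Rle_trans with (exp (- t * x) * qsum (S m) (fun i => INR (Factorial.fact m) * Rpower x (al - 1 - INR m) * ((t * x) ^ i / INR (Factorial.fact i)))).
  - apply Rmult_le_compat_l. apply Rlt_le, exp_pos. apply qsum_le. intros i Hi.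
    rewrite Rabs_mult, (Rabs_pos_eq (Rpower _ _)); [|apply Rlt_le, exp_pos].
    replace (INR (Factorial.fact m) * Rpower x (al - 1 - INR m) * ((t * x) ^ i / INR (Factorial.fact i)))
      with (Bnd t m i * Rpower x (al - 1 - INR m + INR i)).
    apply Rmult_le_compat_r. apply Rlt_le, exp_pos. apply ecoef_bound; auto.
    rewrite Rpower_plus, Rpower_pow; auto. unfold Bnd. rewrite Rpow_mult_distr.
    assert (H2 := fact_pos i). field. lra.
  - rewrite qsum_scal, qsum_sum_f.
    assert (Hs := exp_ge_taylor (t * x) m ltac:(nra)).
    assert (HR : 0 < INR (Factorial.fact m) * Rpower x (al - 1 - INR m)).
    { apply Rmult_lt_0_compat. apply fact_pos. apply exp_pos. }
    apply Rle_trans with (exp (- t * x) * (INR (Factorial.fact m) * Rpower x (al - 1 - INR m) * exp (t * x))).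
    apply Rmult_le_compat_l. apply Rlt_le, exp_pos. apply Rmult_le_compat_l; lra.
    replace (exp (- t * x) * (INR (Factorial.fact m) * Rpower x (al - 1 - INR m) * exp (t * x)))
      with (INR (Factorial.fact m) * Rpower x (al - 1 - INR m) * (exp (- t * x) * exp (t * x))) by ring.
    rewrite <- exp_plus. replace (- t * x + t * x) with 0 by ring. rewrite exp_0. lra.
Qed.

Fixpoint Tch (k : nat) (y : R) : R :=
  match k with
  | O => 1
  | S k' => match k' with O => y | S k'' => 2 * y * Tch k' y - Tch k'' y end
  end.

Lemma Tch_SS k y : Tch (S (S k)) y = 2 * y * Tch (S k) y - Tch k y.
Proof. reflexivity. Qed.

Lemma Tch_cos k th : Tch k (cos th) = cos (INR k * th).
Proof.
  assert (forall k, Tch k (cos th) = cos (INR k * th) /\ Tch (S k) (cos th) = cos (INR (S k) * th)).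
  { induction k0. split; simpl. rewrite Rmult_0_l, cos_0; auto. f_equal; ring.
    destruct IHk0 as [H1 H2]. split; auto. rewrite Tch_SS, H1, H2.
    replace (INR (S (S k0)) * th) with (INR (S k0) * th + th) by (rewrite (S_INR (S k0)); ring).
    replace (INR k0 * th) with (INR (S k0) * th - th) by (rewrite S_INR; ring).
    rewrite cos_plus, cos_minus. ring. }
  apply H.
Qed.

Lemma Tch_bound k y : -1 <= y <= 1 -> Rabs (Tch k y) <= 1.
Proof.
  intros H. rewrite <- (cos_acos y H), Tch_cos. apply Rabs_le. apply COS_bound.
Qed.

Lemma Tch_monic k u v : span (S k) (fun x => Tch (S k) (u * x + v) - 2 ^ k * u ^ (S k) * x ^ (S k)).
Proof.
  assert (forall k, span (S k) (fun x => Tch (S k) (u * x + v) - 2 ^ k * u ^ (S k) * x ^ (S k)) /\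
     span (S (S k)) (fun x => Tch (S (S k)) (u * x + v) - 2 ^ (S k) * u ^ (S (S k)) * x ^ (S (S k)))).
  { induction k0.
    - split.
      + apply span_ext with (fun _ => v). apply span_const; lia. intros; simpl; ring.
      + apply span_ext with (fun x => (4 * u * v) * x + (2 * v * v - 1)). apply span_lin.
        intros; simpl; ring.
    - destruct IHk0 as [H1 H2]. split; auto.
      apply span_ext with (fun x => (2 * u * x + 2 * v) * (Tch (S (S k0)) (u * x + v) - 2 ^ (S k0) * u ^ (S (S k0)) * x ^ (S (S k0)))
        + (2 * v * 2 ^ (S k0) * u ^ (S (S k0))) * x ^ (S (S k0))
        + - 1 * (Tch (S k0) (u * x + v) - 2 ^ k0 * u ^ (S k0) * x ^ (S k0))
        + (- 2 ^ k0 * u ^ (S k0)) * x ^ (S k0)).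
      + apply span_plus. apply span_plus. apply span_plus.
        * replace (S (S (S k0))) with (2 + S (S k0) - 1)%nat by lia. apply span_mul; auto.
          apply span_lin.
        * apply span_mon; lia.
        * apply span_scal. apply span_mono with (S k0); auto.
        * apply span_mon; lia.
      + intros x. rewrite (Tch_SS (S k0)). simpl pow. ring. }
  apply H.
Qed.

Definition qch n h c0 x := 2 * (h / 2) ^ n * Tch n ((x - c0) / h).

Lemma qch_monic n h c0 : (0 < n)%nat -> 0 < h -> monic n (qch n h c0).
Proof.
  intros Hn Hh. destruct n as [|n']. lia.
  exists (fun x => 2 * (h / 2) ^ (S n') * (Tch (S n') (/ h * x + - c0 / h) - 2 ^ n' * (/ h) ^ (S n') * x ^ (S n'))).
  split. apply span_scal. apply Tch_monic.
  intros x. unfold qch. replace ((x - c0) / h) with (/ h * x + - c0 / h) by (field; lra).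
  assert (E : 2 * (h / 2) ^ S n' * (2 ^ n' * (/ h) ^ S n') = 1).
  { replace (2 * (h / 2) ^ S n' * (2 ^ n' * (/ h) ^ S n')) with ((2 * (h / 2) * / h) ^ S n')
      by (rewrite !Rpow_mult_distr; simpl; ring).
    replace (2 * (h / 2) * / h) with 1 by (field; lra). apply pow1. }
  transitivity (2 * (h / 2) ^ S n' * (2 ^ n' * (/ h) ^ S n') * x ^ S n' +
     2 * (h / 2) ^ S n' * (Tch (S n') (/ h * x + - c0 / h) - 2 ^ n' * (/ h) ^ S n' * x ^ S n')).
  ring. rewrite E. ring.
Qed.

Definition theta n j := (2 * INR j + 1) * PI / (2 * INR n).

Lemma qch_root n h c0 j : (0 < n)%nat -> 0 < h -> qch n h c0 (c0 + h * cos (theta n j)) = 0.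
Proof.
  intros Hn Hh. unfold qch. replace ((c0 + h * cos (theta n j) - c0) / h) with (cos (theta n j)) by (field; lra).
  rewrite Tch_cos. replace (INR n * theta n j) with (IZR (Z.of_nat j) * PI + PI / 2).
  rewrite cos_eq_0_1. ring. eauto.
  unfold theta. rewrite <- INR_IZR_INZ. assert (0 < INR n) by (apply lt_0_INR; auto). field. lra.
Qed.

Lemma theta_range n j : (j < n)%nat -> 0 <= theta n j <= PI.
Proof.
  intros H. unfold theta. assert (0 < INR n) by (apply lt_0_INR; lia).
  assert (INR (S j) <= INR n) by (apply le_INR; lia). rewrite S_INR in H1.
  assert (0 <= INR j) by apply pos_INR. assert (0 < PI) by apply PI_RGT_0.
  split. apply Rmult_le_pos. apply Rmult_le_pos; lra. apply Rlt_le, Rinv_0_lt_compat; lra.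
  apply Rmult_le_reg_r with (2 * INR n). lra. unfold Rdiv. rewrite Rmult_assoc, Rinv_l; nra.
Qed.

Lemma cos_theta_inj n i j : (i < n)%nat -> (j < n)%nat -> cos (theta n i) = cos (theta n j) -> i = j.
Proof.
  intros Hi Hj E. destruct (Nat.lt_trichotomy i j) as [H|[H|H]]; auto; exfalso.
  - assert (theta n i < theta n j).
    { unfold theta. assert (0 < INR n) by (apply lt_0_INR; lia). assert (INR i < INR j) by (apply lt_INR; auto).
      assert (0 < PI) by apply PI_RGT_0. unfold Rdiv. apply Rmult_lt_compat_r.
      apply Rinv_0_lt_compat; lra. nra. }
    destruct (theta_range n i Hi), (theta_range n j Hj).
    assert (cos (theta n j) < cos (theta n i)) by (apply cos_decreasing_1; lra). lra.
  - assert (theta n j < theta n i).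
    { unfold theta. assert (0 < INR n) by (apply lt_0_INR; lia). assert (INR j < INR i) by (apply lt_INR; auto).
      assert (0 < PI) by apply PI_RGT_0. unfold Rdiv. apply Rmult_lt_compat_r.
      apply Rinv_0_lt_compat; lra. nra. }
    destruct (theta_range n i Hi), (theta_range n j Hj).
    assert (cos (theta n i) < cos (theta n j)) by (apply cos_decreasing_1; lra). lra.
Qed.

Lemma avoid (l : list R) u v : u < v ->
  exists u' v', u <= u' < v' /\ v' <= v /\ forall x, u' < x < v' -> ~ In x l.
Proof.
  induction l as [|e l IH]; intros H.
  - exists u, v. repeat split; try lra. intros x _ [].
  - destruct (IH H) as [u1 [v1 [H1 [H2 H3]]]].
    destruct (Rle_dec e u1).
    + exists u1, v1. repeat split; try lra. intros x Hx [E|E]. lra. apply (H3 x); auto.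
    + destruct (Rle_dec v1 e).
      * exists u1, v1. repeat split; try lra. intros x Hx [E|E]. lra. apply (H3 x); auto.
      * exists u1, e. repeat split; try lra. intros x Hx [E|E]. lra. apply (H3 x); auto; lra.
Qed.

Lemma RInt_ext_R (f g : R -> R) a b : (forall x, Rmin a b < x < Rmax a b -> f x = g x) -> RInt f a b = RInt g a b.
Proof. apply RInt_ext. Qed.

Lemma chasles_R f a b c : ex_RInt f a b -> ex_RInt f b c -> RInt f a b + RInt f b c = RInt f a c.
Proof. intros H1 H2. exact (RInt_Chasles f a b c H1 H2). Qed.

Lemma pos_int h a b u v : (forall x, continuous h x) -> a <= u -> u < v -> v <= b ->
  (forall x, a < x < b -> 0 <= h x) -> (forall x, u < x < v -> 0 < h x) -> 0 < RInt h a b.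
Proof.
  intros Hc H1 H2 H3 H4 H5.
  assert (Ex : forall p q, ex_RInt h p q) by (intros; apply (ex_RInt_continuous (V:=R_CompleteNormedModule)); auto).
  rewrite <- (chasles_R h a u b), <- (chasles_R h u v b); auto.
  assert (0 <= RInt h a u) by (apply RInt_ge_0; auto; intros; apply H4; lra).
  assert (0 <= RInt h v b) by (apply RInt_ge_0; auto; intros; apply H4; lra).
  assert (0 < RInt h u v) by (apply RInt_gt_0; auto).
  lra.
Qed.

Definition exactness n a b (s w : nat -> R) :=
  forall i, (i < 2 * n)%nat -> RInt (fun x => x ^ i) a b = qsum n (fun k => w k * s k ^ i).

Lemma nodes_inside n a b s w : a < b -> (0 < n)%nat -> inj_on n s -> exactness n a b s w ->
  forall k, (k < n)%nat -> a < s k < b.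
Proof.
  intros Hab Hn Hs He k Hk.
  set (g := fun x => (x - s k) * (ell s n k x * ell s n k x)).
  assert (Hg : span (2 * n) g).
  { unfold g. replace (2 * n)%nat with (2 + (n + n - 1) - 1)%nat by lia.
    apply span_mul. apply span_ext with (fun x => 1 * x + - s k). apply span_lin. intros; ring.
    apply span_mul; apply ell_span; auto. }
  assert (HI : RInt g a b = 0).
  { rewrite (exact_span n a b s w g He Hg). apply qsum_zero. intros l Hl. unfold g.
    destruct (Nat.eq_dec l k). subst. ring. rewrite ell_other; auto. ring. }
  destruct (avoid (map s (seq 0 n)) a b Hab) as [u [v [Hu [Hv Hav]]]].
  assert (Hell : forall x, u < x < v -> ell s n k x <> 0).
  { intros x Hx. unfold ell. apply prod_nz. intros j Hj. apply In_excl in Hj; auto.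
    intros E. unfold Rdiv in E. apply Rmult_integral in E as [E|E].
    - apply (Hav x Hx). apply in_map_iff. exists j. split. lra. apply in_seq; lia.
    - revert E. apply Rinv_neq_0_compat. intros E. apply Rminus_diag_uniq in E. apply Hs in E; lia. }
  assert (Hc : forall x, continuous g x) by (apply span_cont with (2 * n)%nat; auto).
  split.
  - destruct (Rlt_dec a (s k)) as [|Hsk]; auto. exfalso.
    assert (0 < RInt g a b); [|lra].
    apply (pos_int g a b u v); auto; try lra.
    + intros x Hx. unfold g. apply Rmult_le_pos. lra. apply Rle_0_sqr.
    + intros x Hx. unfold g. apply Rmult_lt_0_compat. lra.
      specialize (Hell x Hx). apply Rlt_0_sqr in Hell. exact Hell.
  - destruct (Rlt_dec (s k) b) as [|Hsk]; auto. exfalso.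
    assert (0 < RInt (fun x => -1 * g x) a b); [|rewrite RInt_scal_R in H; [lra|];
      apply (ex_RInt_continuous (V:=R_CompleteNormedModule)); auto].
    apply (pos_int _ a b u v); auto; try lra.
    + intros x. apply (continuous_mult (fun _ => -1) g). apply continuous_const. auto.
    + intros x Hx. unfold g. assert (0 <= ell s n k x * ell s n k x) by apply Rle_0_sqr.
      assert (x - s k <= 0) by lra. nra.
    + intros x Hx. unfold g. specialize (Hell x Hx). apply Rlt_0_sqr in Hell. unfold Rsqr in Hell.
      assert (x - s k < 0) by lra. nra.
Qed.

Lemma monic_span m f : monic m f -> span (S m) f.
Proof.
  intros [r [Hr Hf]]. apply span_ext with (fun x => 1 * x ^ m + r x).
  apply span_plus. apply span_mon; lia. apply span_mono with m; auto. intros; rewrite Hf; ring.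
Qed.

Lemma orth n a b s w q : a <= b -> exactness n a b s w -> monic n q ->
  RInt (fun x => omega s n x * omega s n x) a b <= RInt (fun x => q x * q x) a b.
Proof.
  intros Hab He [rq [Hrq Hq]].
  destruct (omega_monic s n) as [rp [Hrp Hp]].
  set (P := omega s n). set (d := fun x => rq x - rp x).
  assert (Hd : span n d) by (apply span_minus; auto).
  assert (HP : span (S n) P) by (apply monic_span; apply omega_monic).
  assert (HPd : span (2 * n) (fun x => P x * d x)).
  { apply span_mono with (S n + n - 1)%nat. lia. apply span_mul; auto. }
  assert (H0 : RInt (fun x => P x * d x) a b = 0).
  { rewrite (exact_span n a b s w _ He HPd). apply qsum_zero. intros k Hk. unfold P.
    rewrite omega_zero; auto. ring. }
  assert (Ex : forall m f, span m f -> ex_RInt f a b) by (intros; eapply span_exr; eauto).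
  rewrite (RInt_ext_R (fun x => q x * q x) (fun x => (P x * P x + 2 * (P x * d x)) + d x * d x)).
  2:{ intros x _. unfold P, d in *. rewrite Hq, Hp. ring. }
  assert (E1 : ex_RInt (fun x => P x * P x) a b) by (eapply Ex; apply span_mul; eauto).
  assert (E2 : ex_RInt (fun x => P x * d x) a b) by (eapply Ex; apply span_mul; eauto).
  assert (E3 : ex_RInt (fun x => d x * d x) a b) by (eapply Ex; apply span_mul; eauto).
  assert (E4 : ex_RInt (fun x => 2 * (P x * d x)) a b) by (apply exr_scal; auto).
  assert (E5 : ex_RInt (fun x => P x * P x + 2 * (P x * d x)) a b) by (apply exr_plus; auto).
  rewrite RInt_plus_R, RInt_plus_R, RInt_scal_R, H0; auto.
  assert (0 <= RInt (fun x => d x * d x) a b).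
  { apply RInt_ge_0; auto. intros; apply Rle_0_sqr. }
  lra.
Qed.

Lemma interp_error_gen (F : nat -> R -> R) m z L U x W0 :
  (forall i y, L <= y <= U -> is_derive (F i) y (F (S i) y)) ->
  inj_on m z -> (forall i, (i < m)%nat -> L <= z i <= U) -> L <= x <= U ->
  monic m W0 -> (forall i, (i < m)%nat -> W0 (z i) = 0) ->
  exists xi, L <= xi <= U /\
    F O x - lag (F O) z m x = W0 x * F m xi / INR (Factorial.fact m).
Proof.
  intros HF Hz HzLU Hx HW0 HWz.
  destruct (classic (exists k, (k < m)%nat /\ x = z k)) as [[k [Hk ->]]|Hnot].
  { exists (z k). split. apply HzLU; auto. rewrite lag_node, HWz; auto.
    unfold Rdiv; ring. }
  destruct (monic_chain _ _ HW0) as [W [HW [HW0' HWm]]].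
  assert (Hlist : NoDup (x :: map z (seq 0 m))).
  { constructor.
    + intros Hin. apply in_map_iff in Hin as [k [Hk1 Hk2]]. apply in_seq in Hk2.
      apply Hnot. exists k. split; [lia|auto].
    + apply NoDup_map_NoDup_ForallPairs. intros i j Hi Hj E. apply in_seq in Hi, Hj.
      apply Hz; auto; lia. apply seq_NoDup. }
  assert (Hlen : length (x :: map z (seq 0 m)) = S m).
  { simpl. rewrite length_map, length_seq. reflexivity. }
  assert (Hnz : W0 x <> 0).
  { intros E. destruct (rolle_iter m W L U) with (l := x :: map z (seq 0 m)) as [xi [_ Hxi]].
    - intros i y _. apply HW; auto.
    - exact Hlist.
    - exact Hlen.
    - intros y [<-|Hy]. split; auto. rewrite HW0'; auto.
      apply in_map_iff in Hy as [k [<- Hk]]. apply in_seq in Hk. split. apply HzLU; lia.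
      rewrite HW0'. apply HWz; lia.
    - rewrite HWm in Hxi. apply (INR_fact_neq_0 m); auto. }
  set (K := (F O x - lag (F O) z m x) / W0 x).
  destruct (span_chain _ _ (lag_span (F O) z m)) as [P [HP [HP0 HPd]]].
  destruct (rolle_iter m (fun i y => F i y - P i y - K * W i y) L U) with
    (l := x :: map z (seq 0 m)) as [xi [Hxi Hxi0]].
  - intros i y Hy. apply isd_minus. apply isd_minus. apply HF; auto. apply HP; auto.
    apply is_derive_scal. apply HW; auto.
  - exact Hlist.
  - exact Hlen.
  - intros y [<-|Hy].
    + split; auto. rewrite HP0, HW0'. unfold K. field; auto.
    + apply in_map_iff in Hy as [k [<- Hk]]. apply in_seq in Hk. split. apply HzLU; lia.
      rewrite HP0, HW0', lag_node, HWz; auto; try lia. ring.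
  - exists xi. split; auto. rewrite HPd, HWm in Hxi0; auto.
    assert (HK : K = F m xi / INR (Factorial.fact m)).
    { assert (Hf := INR_fact_neq_0 m). field_simplify_eq; auto. lra. }
    assert (F O x - lag (F O) z m x = K * W0 x) by (unfold K; field; auto).
    rewrite H, HK. field. apply INR_fact_neq_0.
Qed.

Lemma Rpower_le_neg (l0 x0 e0 : R) : 0 < l0 <= x0 -> e0 <= 0 -> Rpower x0 e0 <= Rpower l0 e0.
Proof.
  intros [HL Hx] He. unfold Rpower. destruct (Req_dec l0 x0). subst; lra.
  assert (ln l0 < ln x0) by (apply ln_increasing; lra).
  destruct (Req_dec e0 0). subst. rewrite !Rmult_0_l. lra.
  left. apply exp_increasing. nra.
Qed.

Lemma cont_exr (f : R -> R) (a b : R) : a <= b -> (forall x, a <= x <= b -> continuous f x) -> ex_RInt f a b.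
Proof.
  intros Hab H. apply (ex_RInt_continuous (V:=R_CompleteNormedModule)).
  rewrite Rmin_left, Rmax_right; auto.
Qed.

Lemma span_cont_R d f x : span d f -> continuous f x.
Proof. intros H; eapply span_cont; eauto. Qed.

Lemma cont_minus (f g : R -> R) x : continuous f x -> continuous g x -> continuous (fun y => f y - g y) x.
Proof. intros H1 H2. exact (continuous_minus f g x H1 H2). Qed.
Lemma cont_mult (f g : R -> R) x : continuous f x -> continuous g x -> continuous (fun y => f y * g y) x.
Proof. intros H1 H2. exact (continuous_mult f g x H1 H2). Qed.
Lemma cont_plus (f g : R -> R) x : continuous f x -> continuous g x -> continuous (fun y => f y + g y) x.
Proof. intros H1 H2. exact (continuous_plus f g x H1 H2). Qed.

Lemma final_num a al n : 0 < a -> 0 < al < 1 -> (0 < n)%nat ->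
  Rpower (9 * a / 10) (al - 1 - INR (2 * n)) * (a * ((2 * ((11 * a / 20) / 2) ^ n) * (2 * ((11 * a / 20) / 2) ^ n)))
  < 2 * sqrt 2 * PI * Rpower a al * (exp (1 / exp 1) / 4) ^ (2 * n).
Proof.
  intros Ha Hal Hn. set (N := (2 * n)%nat).
  assert (E1 : Rpower (9 * a / 10) (al - 1 - INR N) = Rpower (9/10) (al - 1) * Rpower a (al - 1) / (9 * a / 10) ^ N).
  { replace (al - 1 - INR N) with ((al - 1) + - INR N) by ring.
    rewrite Rpower_plus, Rpower_Ropp, Rpower_pow by lra.
    replace (9 * a / 10) with (9/10 * a) by field. rewrite <- Rpower_mult_distr by lra.
    unfold Rdiv. ring. }
  assert (E2 : Rpower a al = Rpower a (al - 1) * a).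
  { replace al with ((al - 1) + 1) at 1 by ring. rewrite Rpower_plus, Rpower_1; auto. }
  assert (E3 : (2 * ((11 * a / 20) / 2) ^ n) * (2 * ((11 * a / 20) / 2) ^ n) = 4 * ((11/36) ^ N * (9 * a / 10) ^ N)).
  { rewrite <- Rpow_mult_distr. unfold N. rewrite pow_mult.
    replace (11 / 36 * (9 * a / 10)) with ((11 * a / 20) / 2) by field.
    rewrite <- pow_mult, Nat.mul_comm, pow_mult. simpl. ring. }
  rewrite E1, E2, E3.
  set (A := Rpower a (al - 1)). assert (HA : 0 < A) by apply exp_pos.
  set (R9 := Rpower (9/10) (al - 1)). assert (HR9 : 0 < R9) by apply exp_pos.
  assert (HR9' : R9 <= 10 / 9).
  { unfold R9, Rpower. assert (ln (9/10) < 0). { rewrite <- ln_1. apply ln_increasing; lra. }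
    replace (10 / 9) with (exp (- ln (9/10))).
    - destruct (Req_dec ((al - 1) * ln (9 / 10)) (- ln (9/10))) as [E|E]. rewrite E; lra.
      left. apply exp_increasing. nra.
    - rewrite exp_Ropp, exp_ln by lra. field. }
  set (X := (9 * a / 10) ^ N). assert (HX : 0 < X) by (apply pow_lt; lra).
  set (Y := (11/36) ^ N). assert (HY : 0 < Y) by (apply pow_lt; lra).
  set (Z := (exp (1 / exp 1) / 4) ^ N).
  assert (HYZ : Y <= Z).
  { unfold Y, Z. apply pow_incr. split. lra.
    assert (exp 1 <= 3) by apply exp_le_3. assert (0 < exp 1) by apply exp_pos.
    assert (1 / 3 <= 1 / exp 1) by (apply Rmult_le_compat_l; [lra|]; apply Rinv_le_contravar; lra).
    assert (1 + 1 / exp 1 <= exp (1 / exp 1)) by apply exp_ineq1_le. lra. }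
  assert (Hs : 14/10 < sqrt 2).
  { assert (H0 := sqrt_pos 2). assert (H1 := sqrt_sqrt 2 ltac:(lra)). nra. }
  assert (Hpi : 2 < PI) by (assert (H := PI2_1); lra).
  replace (R9 * A / X * (a * (4 * (Y * X)))) with ((4 * R9) * (A * a * Y)) by (field; lra).
  replace (2 * sqrt 2 * PI * (A * a) * Z) with ((2 * sqrt 2 * PI) * (A * a * Z)) by ring.
  assert (0 < A * a * Y) by (apply Rmult_lt_0_compat; [nra|lra]).
  assert (A * a * Y <= A * a * Z) by (apply Rmult_le_compat_l; nra).
  assert (4 * R9 < 2 * sqrt 2 * PI) by nra.
  nra.
Qed.

Theorem lemma6 (j : Z) (n : nat) (s w : nat -> R) (alpha t : R) :
  (1 < n)%nat ->
  is_gauss_legendre n (powerRZ 2 j) (powerRZ 2 (j + 1)) s w ->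
  0 < alpha < 1 ->
  0 < t ->
  Rabs (RInt (fun x => exp (- t * x) * Rpower x (alpha - 1))
              (powerRZ 2 j) (powerRZ 2 (j + 1))
        - qsum n (fun k => w k * Rpower (s k) (alpha - 1) * exp (- s k * t)))
  < 2 * sqrt 2 * PI * Rpower (powerRZ 2 j) alpha * (exp (1 / exp 1) / 4) ^ (2 * n).
Proof.
  intros Hn [Hinj [_ Hex]] Hal Ht.
  assert (Hb : powerRZ 2 (j + 1) = 2 * powerRZ 2 j).
  { rewrite powerRZ_add by lra. simpl. ring. }
  rewrite Hb in *. set (a := powerRZ 2 j) in *.
  assert (Ha : 0 < a) by (apply powerRZ_lt; lra).
  assert (Hn0 : (0 < n)%nat) by lia.
  assert (Hexact : exactness n a (2 * a) s w) by exact Hex.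
  assert (Hsinj : inj_on n s) by exact Hinj.
  assert (Hnodes := nodes_inside n a (2 * a) s w ltac:(lra) Hn0 Hsinj Hexact).
  set (c0 := 3 * a / 2). set (h := 11 * a / 20).
  assert (Hh : 0 < h) by (unfold h; lra).
  set (B := flat_map (fun k => map (fun jj => s k - c0 - h * cos (theta n jj)) (seq 0 n)) (seq 0 n)).
  destruct (avoid B 0 (a / 20) ltac:(lra)) as [u [v [Hu [Hv Hav]]]].
  set (d := (u + v) / 2).
  assert (Hd : 0 < d < a / 20) by (unfold d; lra).
  assert (HdB : ~ In d B) by (apply Hav; unfold d; lra).
  set (y := fun jj => c0 + d + h * cos (theta n jj)).
  set (q := qch n h (c0 + d)).
  assert (Hqm : monic n q) by (apply qch_monic; auto).
  assert (Hqr : forall jj, q (y jj) = 0) by (intros; apply qch_root; auto).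
  assert (Hsy : forall k jj, (k < n)%nat -> (jj < n)%nat -> s k <> y jj).
  { intros k jj Hk Hjj E. apply HdB. apply in_flat_map. exists k. split. apply in_seq; lia.
    apply in_map_iff. exists jj. split. unfold y in E. lra. apply in_seq; lia. }
  set (z := fun i => if (i <? n)%nat then s i else y (i - n)%nat).
  assert (Hzinj : inj_on (2 * n) z).
  { intros i i' Hi Hi' E. unfold z in E.
    destruct (Nat.ltb_spec i n), (Nat.ltb_spec i' n).
    - apply Hsinj; auto.
    - exfalso. apply (Hsy i (i' - n)%nat); auto; lia.
    - exfalso. apply (Hsy i' (i - n)%nat); auto; lia.
    - assert (cos (theta n (i - n)) = cos (theta n (i' - n))).
      { unfold y in E. apply Rmult_eq_reg_l with h; lra. }
      apply cos_theta_inj in H1; lia. }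
  set (L := 9 * a / 10). set (U := 21 * a / 10).
  assert (HL : 0 < L) by (unfold L; lra).
  assert (HzLU : forall i, (i < 2 * n)%nat -> L <= z i <= U).
  { intros i Hi. unfold z. destruct (Nat.ltb_spec i n).
    - specialize (Hnodes i H). unfold L, U. lra.
    - unfold y, L, U, c0, h. assert (Hc := COS_bound (theta n (i - n))). nra. }
  set (W0 := fun x => omega s n x * q x).
  assert (HW0 : monic (2 * n) W0).
  { replace (2 * n)%nat with (n + n)%nat by lia. apply monic_mul; auto. apply omega_monic. }
  assert (HWz : forall i, (i < 2 * n)%nat -> W0 (z i) = 0).
  { intros i Hi. unfold W0, z. destruct (Nat.ltb_spec i n).
    - rewrite omega_zero; auto; ring.
    - rewrite Hqr; ring. }
  set (F := Fch t alpha).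
  assert (HF : forall i x, L <= x <= U -> is_derive (F i) x (F (S i) x)).
  { intros i x Hx. apply Fch_derive. lra. }
  set (p := lag (F O) z (2 * n)).
  assert (Hps : span (2 * n) p) by apply lag_span.
  assert (Hpn : forall k, (k < n)%nat -> p (s k) = F O (s k)).
  { intros k Hk. assert (E : z k = s k) by (unfold z; destruct (Nat.ltb_spec k n); [auto|lia]).
    unfold p. rewrite <- E. apply lag_node; auto. lia. }
  assert (HF0 : forall x, F O x = exp (- t * x) * Rpower x (alpha - 1)) by (intros; apply Fch_0).
  assert (HFc : forall x, 0 < x -> continuous (F O) x).
  { intros x Hx. apply (ex_derive_continuous (F O) x). eexists. apply Fch_derive; auto. }
  set (C := Rpower L (alpha - 1 - INR (2 * n))).
  assert (HC : 0 < C) by apply exp_pos.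
  set (Mq := 2 * (h / 2) ^ n).
  rewrite (RInt_ext_R _ (F O)). 2:{ intros; rewrite HF0; reflexivity. }
  rewrite (qsum_ext n _ (fun k => w k * p (s k))).
  2:{ intros k Hk. rewrite Hpn, HF0; auto. replace (- s k * t) with (- t * s k) by ring. ring. }
  rewrite <- (exact_span n a (2 * a) s w p Hexact Hps).
  assert (ExF : ex_RInt (F O) a (2 * a)) by (apply cont_exr; [lra|]; intros; apply HFc; lra).
  assert (Exp : ex_RInt p a (2 * a)) by (eapply span_exr; eauto).
  rewrite <- RInt_minus_R; auto.
  set (g := fun x => F O x - p x).
  assert (Hgc : forall x, 0 < x -> continuous g x).
  { intros x Hx. apply cont_minus. apply HFc; auto. apply (span_cont_R (2 * n)); auto. }
  assert (Exg : ex_RInt g a (2 * a)) by (apply cont_exr; [lra|]; intros; apply Hgc; lra).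
  eapply Rle_lt_trans. apply abs_RInt_le; auto. lra.
  set (P := omega s n).
  assert (HPs : span (S n) P) by (apply monic_span; apply omega_monic).
  assert (HQs : span (S n) q) by (apply monic_span; auto).
  assert (HPP : span (S n + S n - 1) (fun x => P x * P x)) by (apply span_mul; auto).
  assert (HQQ : span (S n + S n - 1) (fun x => q x * q x)) by (apply span_mul; auto).
  assert (ExPP : ex_RInt (fun x => P x * P x) a (2 * a)) by (eapply span_exr; eauto).
  assert (ExQQ : ex_RInt (fun x => q x * q x) a (2 * a)) by (eapply span_exr; eauto).
  apply Rle_lt_trans with (RInt (fun x => C / 2 * (P x * P x) + C / 2 * (q x * q x)) a (2 * a)).
  { apply RInt_le. lra.
    - apply cont_exr. lra. intros x Hx. apply (continuous_Rabs_comp g). apply Hgc; lra.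
    - apply exr_plus; apply exr_scal; auto.
    - intros x Hx.
      destruct (interp_error_gen F (2 * n) z L U x W0 HF Hzinj HzLU ltac:(unfold L, U; lra) HW0 HWz)
        as [xi [Hxi Herr]].
      unfold g. fold p in Herr. rewrite Herr.
      assert (Hb1 := Fch_bound t alpha (2 * n) xi Ht Hal ltac:(lra)).
      assert (Hb2 : Rpower xi (alpha - 1 - INR (2 * n)) <= C).
      { apply Rpower_le_neg. lra. assert (0 <= INR (2 * n)) by apply pos_INR. lra. }
      assert (Hfp := fact_pos (2 * n)).
      unfold Rdiv. rewrite Rabs_mult, Rabs_mult, Rabs_inv, (Rabs_pos_eq (INR _)); [|lra].
      unfold W0. rewrite Rabs_mult.
      assert (Hpq : Rabs (P x) * Rabs (q x) <= (P x * P x + q x * q x) / 2).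
      { assert (H0 := Rabs_pos (P x)). assert (H1 := Rabs_pos (q x)).
        assert (Rabs (P x) * Rabs (P x) = P x * P x) by (rewrite <- Rabs_mult; apply Rabs_pos_eq; apply Rle_0_sqr).
        assert (Rabs (q x) * Rabs (q x) = q x * q x) by (rewrite <- Rabs_mult; apply Rabs_pos_eq; apply Rle_0_sqr).
        assert (0 <= (Rabs (P x) - Rabs (q x)) * (Rabs (P x) - Rabs (q x))) by apply Rle_0_sqr.
        lra. }
      fold P.
      assert (Rabs (F (2 * n)%nat xi) * / INR (Factorial.fact (2 * n)) <= C).
      { apply Rmult_le_reg_r with (INR (Factorial.fact (2 * n))). lra.
        rewrite Rmult_assoc, Rinv_l by lra. unfold F. nra. }
      assert (0 <= Rabs (F (2 * n)%nat xi) * / INR (Factorial.fact (2 * n))).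
      { apply Rmult_le_pos. apply Rabs_pos. apply Rlt_le, Rinv_0_lt_compat; lra. }
      assert (0 <= Rabs (P x) * Rabs (q x)) by (apply Rmult_le_pos; apply Rabs_pos).
      nra. }
  rewrite RInt_plus_R, RInt_scal_R, RInt_scal_R; auto; try (apply exr_scal; auto).
  assert (Horth := orth n a (2 * a) s w q ltac:(lra) Hexact Hqm). fold P in Horth.
  assert (Hqb : RInt (fun x => q x * q x) a (2 * a) <= a * (Mq * Mq)).
  { eapply Rle_trans. apply Rle_abs. replace (a * (Mq * Mq)) with ((2 * a - a) * (Mq * Mq)) by ring.
    apply abs_RInt_le_const; auto. lra. intros x Hx.
    rewrite Rabs_mult. unfold q, qch. fold Mq.
    assert (Rabs (Tch n ((x - (c0 + d)) / h)) <= 1).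
    { apply Tch_bound. set (r := (x - (c0 + d)) / h).
      assert (Er : x - (c0 + d) = r * h) by (unfold r; field; lra).
      assert (- h <= x - (c0 + d) <= h) by (unfold c0, h in *; lra).
      split; nra. }
    assert (0 < Mq) by (unfold Mq; apply Rmult_lt_0_compat; [lra|apply pow_lt; lra]).
    rewrite Rabs_mult, (Rabs_pos_eq Mq) by lra.
    assert (Mq * Rabs (Tch n ((x - (c0 + d)) / h)) <= Mq) by nra.
    assert (0 <= Mq * Rabs (Tch n ((x - (c0 + d)) / h))) by (apply Rmult_le_pos; [lra|apply Rabs_pos]).
    nra. }
  apply Rle_lt_trans with (C * (a * (Mq * Mq))).
  { nra. }
  unfold C, L, Mq, h. apply final_num; auto.
Qed.
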